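(* Let $p\le1/2$ and let $g,h\colon(\{0,1\}^n,\mu_p)\to\{0,1\}$ be cross-intersecting. Then \[\mu_p(h)\mu_p(g)\le\sum_{d=1}^n\left(\frac{p}{1-p}\right)^d|\langle h^{=d},g\rangle|,\] where the inner product is with respect to $\mu_p$.
   Context: $\mu_p$ is the $p$-biased product measure on $\{0,1\}^n$, $\mu_p(f)=\mathbb{E}_{\mu_p}f$, $\langle u,v\rangle=\mathbb{E}_{\mu_p}[uv]$. With $\chi_i(x)=\frac{x_i-p}{\sqrt{p(1-p)}}$ and $\chi_S=\prod_{i\in S}\chi_i$, $\hat h(S)=\langle h,\chi_S\rangle$ and $h^{=d}=\sum_{|S|=d}\hat h(S)\chi_S$. Identifying subsets of $[n]$ with points of $\{0,1\}^n$, $g,h$ are cross-intersecting if $A\cap B\ne\emptyset$ whenever $g(A)=1$ and $h(B)=1$. *)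

(* Defs.v *)
(* Points of {0,1}^n are identified with subsets of [n] = 'I_n. *)
From HB Require Import structures.
From mathcomp Require Import all_boot all_order all_algebra.
Set Implicit Arguments. Unset Strict Implicit. Unset Printing Implicit Defensive.
Import Order.TTheory GRing.Theory Num.Theory.
Local Open Scope ring_scope.

Section Biased.
Variables (R : rcfType) (n : nat) (p : R).

Definition mu_pt (x : {set 'I_n}) : R := p ^+ #|x| * (1 - p) ^+ (n - #|x|).

Definition mu_p (f : {set 'I_n} -> R) : R := \sum_(x : {set 'I_n}) mu_pt x * f x.

Definition inner (u v : {set 'I_n} -> R) : R := mu_p (fun x => u x * v x).

Definition chi1 (i : 'I_n) (x : {set 'I_n}) : R :=
  ((i \in x)%:R - p) / Num.sqrt (p * (1 - p)).

Definition chi (S : {set 'I_n}) (x : {set 'I_n}) : R := \prod_(i in S) chi1 i x.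

Definition fourier (h : {set 'I_n} -> R) (S : {set 'I_n}) : R := inner h (chi S).

Definition level (h : {set 'I_n} -> R) (d : nat) (x : {set 'I_n}) : R :=
  \sum_(S : {set 'I_n} | #|S| == d) fourier h S * chi S x.

End Biased.

Definition b2R (R : rcfType) (n : nat) (f : {set 'I_n} -> bool) : {set 'I_n} -> R :=
  fun x => (f x)%:R.

Definition cross_intersecting (n : nat) (g h : {set 'I_n} -> bool) : Prop :=
  forall A B : {set 'I_n}, g A -> h B -> A :&: B != set0.

(* Main.v *)
Require Import Defs.
From mathcomp Require Import all_boot all_order all_algebra.
From mathcomp Require Import ring.
Import Order.TTheory GRing.Theory Num.Theory.
Local Open Scope ring_scope.

Lemma inner_level (R : rcfType) (n : nat) (p : R) (u v : {set 'I_n} -> R) d :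
  inner p (level p u d) v =
  \sum_(S : {set 'I_n} | #|S| == d) fourier p u S * fourier p v S.
Proof.
rewrite /inner /mu_p /level.
under eq_bigr => x _ do rewrite mulr_suml mulr_sumr.
rewrite exchange_big /=; apply: eq_bigr => S _.
rewrite /fourier /inner /mu_p mulr_sumr; apply: eq_bigr => x _.
by rewrite mulrCA -mulrA; congr (_ * _); rewrite mulrC -mulrA.
Qed.

Lemma prod_expand (R : rcfType) (n : nat) (p lam : R) (x y : {set 'I_n}) :
  \sum_(S : {set 'I_n}) lam ^+ #|S| * (chi p S x * chi p S y) =
  \prod_(i : 'I_n) (lam * (chi1 p i x * chi1 p i y) + 1).
Proof.
rewrite bigA_distr; apply: eq_bigr => S _.
rewrite -big_mkcond /= /chi.
by rewrite [RHS]big_split /= [X in _ = _ * X]big_split /= prodr_const.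
Qed.

Lemma factor0 (R : rcfType) (n : nat) (p : R) (hp0 : 0 < p) (hp1 : p < 1)
  (i : 'I_n) (x y : {set 'I_n}) : i \in x -> i \in y ->
  - (p / (1 - p)) * (chi1 p i x * chi1 p i y) + 1 = 0.
Proof.
move=> hx hy; rewrite /chi1 hx hy mulf_div -[Num.sqrt _ * _]expr2 sqr_sqrtr; last first.
  by apply: mulr_ge0; [exact: ltW | rewrite subr_ge0; exact: ltW].
have h1 : 1 - p != 0 by rewrite subr_eq0 eq_sym lt_eqF.
have h2 : p != 0 by rewrite gt_eqF.
rewrite /=; field; by rewrite h1 h2.
Qed.

Theorem mainTheorem17 (R : rcfType) (n : nat) (p : R)
  (hp0 : 0 < p) (hp : p <= 2^-1)
  (g h : {set 'I_n} -> bool) (hgh : cross_intersecting g h) :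
  mu_p p (b2R R h) * mu_p p (b2R R g) <=
  \sum_(1 <= d < n.+1)
     (p / (1 - p)) ^+ d * `| inner p (level p (b2R R h) d) (b2R R g) |.
Proof.
have hp1 : p < 1.
  apply: (le_lt_trans hp); rewrite invf_lt1 ?ltr1n //.
set H := b2R R h; set G := b2R R g.
set lam := - (p / (1 - p)).
have key : \sum_(S : {set 'I_n}) lam ^+ #|S| * (fourier p H S * fourier p G S) = 0.
  transitivity (\sum_(x : {set 'I_n}) \sum_(y : {set 'I_n})
     (mu_pt p x * H x) * (mu_pt p y * G y) *
     \sum_(S : {set 'I_n}) lam ^+ #|S| * (chi p S x * chi p S y)).
    under eq_bigr => S _ do rewrite /fourier /inner /mu_p mulr_suml mulr_sumr.
    rewrite exchange_big /=; apply: eq_bigr => x _.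
    under eq_bigr => S _ do rewrite mulr_sumr mulr_sumr.
    rewrite exchange_big /=; apply: eq_bigr => y _.
    rewrite mulr_sumr; apply: eq_bigr => S _.
    ring.
  apply: big1 => x _; apply: big1 => y _.
  rewrite prod_expand /H /G /b2R.
  case hx: (h x); last by rewrite mulr0 !mul0r.
  case gy: (g y); last by rewrite !mulr0 mul0r.
  have /set0Pn [i] := hgh y x gy hx.
  rewrite inE => /andP [iy ix].
  by rewrite (bigD1 i) //= factor0 // mul0r mulr0.
have part : \sum_(d < n.+1) lam ^+ d * inner p (level p H d) G =
    \sum_(S : {set 'I_n}) lam ^+ #|S| * (fourier p H S * fourier p G S).
  under eq_bigr => d _ do rewrite inner_level mulr_sumr.
  rewrite (partition_big (fun S : {set 'I_n} => inord #|S| : 'I_n.+1) predT) //=.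
  apply: eq_big => // d _. apply eq_big => S.
    have hS : (#|S| < n.+1)%N by rewrite ltnS; apply: leq_trans (max_card (mem S)) _; rewrite card_ord.
    by rewrite -val_eqE /= inordK.
  by move=> /eqP <-.
move: part; rewrite key -(@big_mkord _ _ _ n.+1 xpredT (fun d => lam ^+ d * inner p (level p H d) G)).
rewrite big_ltn // expr0 mul1r inner_level.
rewrite (eq_bigl (pred1 set0)); last by move=> S; rewrite /= cards_eq0.
rewrite big_pred1_eq.
have f0 : forall F : {set 'I_n} -> R, fourier p F set0 = mu_p p F.
  move=> F; rewrite /fourier /inner /mu_p; apply: eq_bigr => x _.
  by rewrite /chi big_set0 mulr1.
rewrite !f0 => /eqP; rewrite addr_eq0 => /eqP ->.
set A := \sum_(1 <= d < n.+1) _.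
apply: (le_trans (_ : - A <= `|A|)); first by rewrite -normrN ler_norm.
apply: (le_trans (ler_norm_sum _ _ _)).
apply: ler_sum => d _.
rewrite normrM normrX /lam normrN (@ger0_norm _ (p / (1 - p))) //.
apply: divr_ge0; [exact: ltW | rewrite subr_ge0; exact: ltW].
Qed.
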